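(* Let $k\ge2$ be fixed. Then $m_k(n)/\gamma_k(n)\to1$ as $n\to\infty$.
   Context: Let $G=\{g_1=e,\dots,g_k\}$ be a group of order $k$. A labeled graph on $G$ with $n$ edges has vertex set $G$ and $n$ directed edges labeled $1,\dots,n$, each an ordered pair of vertices (loops and multiple edges allowed). The degree of a vertex is the number of edges having it as initial or terminal point, a loop counted twice. $m_k(n)$ is the number of such graphs having an Eulerian path starting at $e$ in the underlying undirected graph (a walk ignoring orientations starting at $e$ and using each edge exactly once). A graph has an Eulerian pseudo-path from $e$ to $g_i$ if all vertices other than $e,g_i$ have even degree, $\deg e$ is even when $g_i=e$, and $\deg e,\deg g_i$ are odd when $g_i\neq e$ (no connectivity required); $\gamma_k(n)$ is the number of labeled graphs on $G$ with $n$ edges having an Eulerian pseudo-path from $e$ to some vertex of $G$. *)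

(* Defs.v *)
From HB Require Import structures.
From mathcomp Require Import all_boot all_order all_algebra all_fingroup.
Set Implicit Arguments. Unset Strict Implicit. Unset Printing Implicit Defensive.
Import Order.TTheory GRing.Theory Num.Theory.

(* A labeled graph on the group gT with n edges: edge i is the ordered pair
   (initial point, terminal point). Loops and multiple edges are allowed. *)
Definition lgraph (gT : finGroupType) (n : nat) := {ffun 'I_n -> gT * gT}.

(* degree: number of edge ends at x (a loop counts twice) *)
Definition deg (gT : finGroupType) (n : nat) (g : lgraph gT n) (x : gT) : nat :=
  \sum_(i < n) ((x == (g i).1) + (x == (g i).2)).

(* Eulerian path starting at e = 1 in the underlying undirected graph:
   an ordering p of the edges and vertices v_0 = 1, v_1, ..., v_n such that
   the i-th edge of the ordering joins v_i and v_{i+1} (in either direction). *)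
Definition has_euler_path (gT : finGroupType) (n : nat) (g : lgraph gT n) : bool :=
  [exists p : {perm 'I_n}, exists v : {ffun 'I_n.+1 -> gT},
     (v ord0 == 1%g) &&
     [forall i : 'I_n,
        let a := v (widen_ord (leqnSn n) i) in
        let b := v (lift ord0 i) in
        (g (p i) == (a, b)) || (g (p i) == (b, a))]].

Definition has_euler_pseudo_path (gT : finGroupType) (n : nat) (g : lgraph gT n) : bool :=
  [exists t : gT,
     [forall x : gT, ((x != 1%g) && (x != t)) ==> ~~ odd (deg g x)] &&
     (if t == 1%g then ~~ odd (deg g 1%g)
      else odd (deg g 1%g) && odd (deg g t))].

Definition m_k (gT : finGroupType) (n : nat) : nat :=
  #|[set g : lgraph gT n | has_euler_path g]|.

Definition gamma_k (gT : finGroupType) (n : nat) : nat :=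
  #|[set g : lgraph gT n | has_euler_pseudo_path g]|.

(* Main.v *)
Require Import Defs.
From HB Require Import structures.
From mathcomp Require Import all_boot all_order all_algebra all_fingroup.
From mathcomp Require Import zify ring lra.
Import Order.TTheory GRing.Theory Num.Theory.
Set Implicit Arguments. Unset Strict Implicit. Unset Printing Implicit Defensive.

Definition dg (T : finType) (I : eqType) (g : I -> T * T) (E : seq I) (x : T) : nat :=
  \sum_(i <- E) ((x == (g i).1) + (x == (g i).2)).
Definition insd (T : finType) (I : eqType) (g : I -> T * T) (A : {set T}) (i : I) : bool :=
  ((g i).1 \in A) && ((g i).2 \in A).
Definition crs (T : finType) (I : eqType) (g : I -> T * T) (A : {set T}) (i : I) : bool :=
  ((g i).1 \in A) != ((g i).2 \in A).
Definition conn (T : finType) (I : eqType) (g : I -> T * T) (E : seq I) (s : T) : bool :=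
  [forall A : {set T}, (s \in A) ==> (all (insd g A) E || has (crs g A) E)].
Definition par (T : finType) (I : eqType) (g : I -> T * T) (E : seq I) (s t : T) : Prop :=
  forall x, odd (dg g E x) = ((x == s) != (x == t)).

Inductive walk (T : finType) (I : eqType) (g : I -> T * T) : T -> seq I -> T -> Prop :=
| wnil s : walk g s [::] s
| wcons s u t i W : (g i == (s, u)) || (g i == (u, s)) -> walk g u W t -> walk g s (i :: W) t.

Lemma walk_cat (T : finType) (I : eqType) (g : I -> T * T) s m t W1 W2 :
  walk g s W1 m -> walk g m W2 t -> walk g s (W1 ++ W2) t.
Proof. by elim=> [//|s' u t' i W h _ IH] /IH; apply: wcons. Qed.

Lemma dg_perm (T : finType) (I : eqType) (g : I -> T * T) E F x :
  perm_eq E F -> dg g E x = dg g F x.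
Proof. by move=> h; rewrite /dg (perm_big _ h). Qed.

Lemma dg_cat (T : finType) (I : eqType) (g : I -> T * T) E F x :
  dg g (E ++ F) x = dg g E x + dg g F x.
Proof. by rewrite /dg big_cat. Qed.

Lemma dg_cons (T : finType) (I : eqType) (g : I -> T * T) i E x :
  dg g (i :: E) x = (x == (g i).1) + (x == (g i).2) + dg g E x.
Proof. by rewrite /dg big_cons. Qed.

Lemma odd_sumT (T : finType) (f : T -> nat) :
  odd (\sum_x f x) = \big[addb/false]_x odd (f x).
Proof. by apply: (big_morph odd) => // a b; rewrite oddD. Qed.

Lemma sum_eq1 (T : finType) (a : T) : \sum_(x : T) (x == a : nat) = 1.
Proof. by rewrite (bigD1 a) //= eqxx big1 // => y /negbTE ->. Qed.

Lemma handshake (T : finType) (I : eqType) (g : I -> T * T) E :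
  \sum_(x : T) dg g E x = (size E).*2.
Proof.
rewrite /dg exchange_big /= -muln2 -sum1_size big_distrl /=.
apply: eq_bigr => i _; rewrite big_split /= !sum_eq1 //.
Qed.

Lemma xor_eq1 (T : finType) (a : T) : \big[addb/false]_(x : T) (x == a) = true.
Proof. by rewrite (bigD1 a) //= eqxx big1 // => y /negbTE ->. Qed.

Lemma par_nil (T : finType) (I : eqType) (g : I -> T * T) s t :
  par g [::] s t -> s = t.
Proof. move=> /(_ s); rewrite /dg big_nil eqxx /=. by case: (s =P t). Qed.

Lemma incident (T : finType) (I : eqType) (g : I -> T * T) E s :
  conn g E s -> E != [::] ->
  exists i u, i \in E /\ ((g i == (s, u)) || (g i == (u, s))).
Proof.
move=> /forallP /(_ [set s]); rewrite inE eqxx /= => /orP [hall|hhas] hE.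
  case: E hE hall => [//|i E] _ /= /andP [hi _].
  exists i, s; split; first by rewrite inE eqxx.
  move: hi; rewrite /insd !inE => /andP [/eqP h1 /eqP h2].
  by rewrite [g i]surjective_pairing h1 h2 eqxx.
case/hasP: hhas => i iE; rewrite /crs !inE.
case: (boolP ((g i).1 == s)) => h1 /= h2.
  by exists i, (g i).2; split=>//; rewrite -(eqP h1) -surjective_pairing eqxx.
have h2' : (g i).2 == s by move: h2; case: ((g i).2 == s).
by exists i, (g i).1; split=>//; rewrite -(eqP h2') -surjective_pairing eqxx orbT.
Qed.

Lemma dg_end (T : finType) (I : eqType) (g : I -> T * T) i s u x :
  (g i == (s, u)) || (g i == (u, s)) ->
  (x == (g i).1) + (x == (g i).2) = (x == s) + (x == u).
Proof. by case/orP => /eqP -> //=; rewrite addnC. Qed.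

Lemma par_step (T : finType) (I : eqType) (g : I -> T * T) E E' i s u t :
  (g i == (s, u)) || (g i == (u, s)) -> perm_eq E (i :: E') ->
  par g E s t -> par g E' u t.
Proof.
move=> hi hp hpar x; have := hpar x; rewrite (dg_perm g x hp) dg_cons (dg_end x hi).
rewrite !oddD !oddb.
by case: (x == s); case: (x == u); case: (x == t); case: (odd (dg g E' x)).
Qed.

Lemma euler (T : finType) (I : eqType) (g : I -> T * T) n : forall E s t,
  size E <= n -> par g E s t -> conn g E s ->
  exists W, perm_eq W E /\ walk g s W t.
Proof.
elim: n => [|n IH] E s t hn hpar hcon.
  move: hn; rewrite leqn0 size_eq0 => /eqP hE; subst E.
  by exists [::]; split => //; rewrite (par_nil hpar); constructor.
have [hE|hE] := eqVneq E [::].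
  by subst E; exists [::]; split => //; rewrite (par_nil hpar); constructor.
have [i [u [iE hi]]] := incident hcon hE.
set E' := rem i E.
have hp : perm_eq E (i :: E') := perm_to_rem iE.
have hsz : size E' <= n by rewrite size_rem //; case: (size E) hn => //.
have hpar' : par g E' u t := par_step hi hp hpar.
have memE : forall j, j \in E -> j = i \/ j \in E'.
  by move=> j; rewrite (perm_mem hp) inE => /orP [/eqP|]; [left|right].
have memE' : forall j, j \in E' -> j \in E.
  by move=> j jE; rewrite (perm_mem hp) inE jE orbT.
case: (boolP (conn g E' u)) => hc.
  have [W [hW1 hW2]] := IH E' u t hsz hpar' hc.
  exists (i :: W); split; last by apply: wcons hi hW2.
  by rewrite perm_sym (perm_trans hp) // perm_cons perm_sym.
move: hc => /forallPn [A]; rewrite negb_imply => /andP [uA].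
rewrite negb_or => /andP [nall nhas].
have hE' : forall j, j \in E' -> ((g j).1 \in A) = ((g j).2 \in A).
  move=> j jE; move/hasPn: nhas => /(_ j jE); rewrite /crs.
  by case: ((g j).1 \in A); case: ((g j).2 \in A).
have endA : forall a b, (g i == (a, b)) || (g i == (b, a)) ->
    forall P : T -> bool, P a -> P b -> P (g i).1 && P (g i).2.
  by move=> a b /orP [] /eqP -> P /= -> ->.
have sA : s \notin A.
  apply/negP => sA; move/forallP: hcon => /(_ A); rewrite sA /= => /orP [hall|hhas].
    by move/negP: nall; apply; apply/allP => j /memE' jE; apply: (allP hall).
  case/hasP: hhas => j /memE [->|jE] hj.
    by move: hj; rewrite /crs; have /andP [-> ->] := endA _ _ hi (fun x => x \in A) sA uA.
  by move/hasPn: nhas => /(_ j jE); rewrite hj.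
set C := filter (insd g A) E'.
set D := filter (predC (insd g A)) E'.
have dgCD : forall x, dg g E' x = dg g C x + dg g D x.
  by move=> x; rewrite -dg_cat; apply: dg_perm; rewrite perm_sym perm_filterC.
have dgC0 : forall x, x \notin A -> dg g C x = 0.
  move=> x xA; rewrite /dg big_seq big1 // => j; rewrite mem_filter => /andP [].
  rewrite /insd => /andP [h1 h2] _.
  have -> : (x == (g j).1) = false by apply/eqP => h; move: xA; rewrite h h1.
  by have -> : (x == (g j).2) = false by apply/eqP => h; move: xA; rewrite h h2.
have dgD0 : forall x, x \in A -> dg g D x = 0.
  move=> x xA; rewrite /dg big_seq big1 // => j; rewrite mem_filter => /andP [].
  rewrite /= /insd => h jE; rewrite -(hE' _ jE) andbb in h.
  have -> : (x == (g j).1) = false by apply/eqP => h'; move: h; rewrite -h' xA.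
  by have -> : (x == (g j).2) = false by apply/eqP => h'; move: h; rewrite (hE' _ jE) -h' xA.
have uAf : forall x, x \notin A -> (x == u) = false.
  by move=> x xA; apply/eqP => h; rewrite h uA in xA.
have sAf := negbTE sA.
have tA : t \in A.
  apply/negPn/negP => tA.
  have := congr1 odd (handshake g C); rewrite odd_double odd_sumT.
  rewrite (eq_bigr (fun x => x == u)) ?xor_eq1 // => x _.
  case: (boolP (x \in A)) => xA.
    rewrite -(addn0 (dg g C x)) -(dgD0 x xA) -dgCD hpar'.
    have -> : (x == t) = false by apply/eqP => h; move: tA; rewrite -h xA.
    by case: (x == u).
  by rewrite dgC0 // uAf.
have tAf : forall x, x \notin A -> (x == t) = false.
  by move=> x xA; apply/eqP => h; rewrite h tA in xA.
have parC : par g C u t.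
  move=> x; case: (boolP (x \in A)) => xA.
    by rewrite -(hpar' x) dgCD dgD0 // addn0.
  by rewrite dgC0 // uAf // tAf.
have parD : par g D s s.
  move=> x; rewrite eqxx /=; case: (boolP (x \in A)) => xA.
    by rewrite dgD0.
  by have := hpar' x; rewrite dgCD dgC0 // add0n uAf // tAf.
have cC : conn g C u.
  apply/forallP => B; apply/implyP => uB.
  move/forallP: hcon => /(_ ((B :&: A) :|: ~: A)); rewrite !inE sAf orbT /=.
  case/orP => [hall|hhas].
    apply/orP; left; apply/allP => j; rewrite mem_filter => /andP [jA jE].
    move: (allP hall j (memE' _ jE)) jA; rewrite /insd !inE.
    by case: ((g j).1 \in A); case: ((g j).2 \in A); case: ((g j).1 \in B); case: ((g j).2 \in B).
  apply/orP; right; case/hasP: hhas => j jm h.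
  case: (memE _ jm) => [ej|jE].
    move: h; rewrite ej /crs.
    have H1 : s \in (B :&: A) :|: ~: A by rewrite !inE sAf orbT.
    have H2 : u \in (B :&: A) :|: ~: A by rewrite !inE uB uA.
    by have /andP [-> ->] := endA _ _ hi (fun x => x \in (B :&: A) :|: ~: A) H1 H2.
  case: (boolP (insd g A j)) => hj.
    apply/hasP; exists j; first by rewrite mem_filter /= hj jE.
    move: h hj; rewrite /crs /insd !inE.
    by case: ((g j).1 \in A); case: ((g j).2 \in A); case: ((g j).1 \in B); case: ((g j).2 \in B).
  move: h hj (hE' j jE); rewrite /crs /insd !inE.
  by case: ((g j).1 \in A); case: ((g j).2 \in A); case: ((g j).1 \in B); case: ((g j).2 \in B).
have cD : conn g D s.
  apply/forallP => B; apply/implyP => sB.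
  move/forallP: hcon => /(_ ((B :&: ~: A) :|: A)); rewrite !inE sAf sB /=.
  case/orP => [hall|hhas].
    apply/orP; left; apply/allP => j; rewrite mem_filter => /andP [jA jE].
    move: (allP hall j (memE' _ jE)) jA (hE' j jE); rewrite /insd !inE.
    by case: ((g j).1 \in A); case: ((g j).2 \in A); case: ((g j).1 \in B); case: ((g j).2 \in B).
  apply/orP; right; case/hasP: hhas => j jm h.
  case: (memE _ jm) => [ej|jE].
    move: h; rewrite ej /crs.
    have H1 : s \in (B :&: ~: A) :|: A by rewrite !inE sAf sB.
    have H2 : u \in (B :&: ~: A) :|: A by rewrite !inE uA orbT.
    by have /andP [-> ->] := endA _ _ hi (fun x => x \in (B :&: ~: A) :|: A) H1 H2.
  case: (boolP (insd g A j)) => hj.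
    move: h hj; rewrite /crs /insd !inE.
    by case: ((g j).1 \in A); case: ((g j).2 \in A); case: ((g j).1 \in B); case: ((g j).2 \in B).
  apply/hasP; exists j; first by rewrite mem_filter /= hj jE.
  move: h hj (hE' j jE); rewrite /crs /insd !inE.
  by case: ((g j).1 \in A); case: ((g j).2 \in A); case: ((g j).1 \in B); case: ((g j).2 \in B).
have hC : size C <= n by rewrite size_filter (leq_trans (count_size _ _) hsz).
have hD : size D <= n by rewrite size_filter (leq_trans (count_size _ _) hsz).
have [W1 [p1 w1]] := IH C u t hC parC cC.
have [W2 [p2 w2]] := IH D s s hD parD cD.
exists (W2 ++ i :: W1); split; last by apply: walk_cat w2 _; apply: wcons hi w1.
rewrite perm_sym; apply: (perm_trans hp).
rewrite perm_sym (perm_catC W2) /= perm_cons.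
apply: (perm_trans (perm_cat p1 p2)).
by rewrite /C /D perm_filterC.
Qed.
Lemma index_enumE (T : finType) : index_enum T = enum T.
Proof. by rewrite [index_enum _]unlock enumT. Qed.

Lemma walk_verts (T : finType) (I : eqType) (g : I -> T * T) s W t :
  walk g s W t -> exists vs : seq T, size vs = size W /\
   forall k d dv, k < size W ->
    (g (nth d W k) == (nth dv (s :: vs) k, nth dv vs k)) ||
    (g (nth d W k) == (nth dv vs k, nth dv (s :: vs) k)).
Proof.
elim=> [s' | s' u t' i W' hi _ [vs [hs hk]]]; first by exists [::].
exists (u :: vs); split; first by rewrite /= hs.
by move=> [|k] d dv //= hk'; apply: hk.
Qed.

Lemma tele (a : nat -> nat) n :
  odd (\sum_(i < n) (a i + a i.+1)) = odd (a 0) (+) odd (a n).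
Proof.
elim: n => [|n IH]; first by rewrite big_ord0 addbb.
rewrite big_ord_recr /= oddD IH oddD.
by case: (odd (a 0)); case: (odd (a n)); case: (odd (a n.+1)).
Qed.

Lemma deg_dg (gT : finGroupType) n (g : lgraph gT n) x :
  deg g x = dg (fun i => g i) (index_enum 'I_n) x.
Proof. by []. Qed.

Lemma path_pseudo (gT : finGroupType) n (g : lgraph gT n) :
  has_euler_path g -> has_euler_pseudo_path g.
Proof.
case/existsP => p /existsP [v /andP [/eqP v0 /forallP hv]].
have [t htv] : {t : gT | v ord_max = t} by exists (v ord_max).
have hdeg : forall x, odd (deg g x) = (x == 1%g) (+) (x == t).
  move=> x; rewrite /deg (reindex_inj (@perm_inj _ p)) /=.
  set a := fun k => (x == v (inord k) : nat).
  rewrite (eq_bigr (fun i : 'I_n => a i + a i.+1)).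
    rewrite tele /a !oddb.
    have -> : inord 0 = ord0 :> 'I_n.+1 by apply: val_inj; rewrite /= inordK.
    have -> : inord n = ord_max :> 'I_n.+1 by apply: val_inj; rewrite /= inordK.
    by rewrite v0 htv.
  move=> i _; have := hv i; rewrite /= => hi; rewrite (dg_end x hi) /a.
  have -> : widen_ord (leqnSn n) i = inord i by apply: val_inj; rewrite /= inordK // ltnS ltnW.
  by have -> : lift ord0 i = inord i.+1 by apply: val_inj; rewrite /= /bump leq0n add1n inordK ?ltnS.
apply/existsP; exists t; apply/andP; split.
  apply/forallP => x; apply/implyP => /andP [/negbTE h1 /negbTE h2].
  by rewrite hdeg h1 h2.
case: ifP => [/eqP ht1|/negbT ht]; first by rewrite hdeg ht1 eqxx.
by rewrite !hdeg !eqxx (negbTE ht) eq_sym (negbTE ht).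
Qed.

Lemma pseudo_par (gT : finGroupType) n (g : lgraph gT n) :
  has_euler_pseudo_path g ->
  exists t, par (fun i => g i) (index_enum 'I_n) 1%g t.
Proof.
case/existsP => t /andP [/forallP h1 h2]; exists t => x; rewrite -deg_dg.
case: (eqVneq x 1%g) => [->|x1].
  move: h2; case: (eqVneq t 1%g) => [_|t1] /=; rewrite ?eqxx.
    by move/negbTE.
  by move=> /andP [].
case: (eqVneq x t) => [xt|xt].
  by move: h2; rewrite -xt (negbTE x1) => /andP [_ ->].
by have := h1 x; rewrite x1 xt /= => /negbTE ->.
Qed.

Lemma good_path (gT : finGroupType) n (g : lgraph gT n) :
  has_euler_pseudo_path g -> conn (fun i => g i) (index_enum 'I_n) 1%g ->
  has_euler_path g.
Proof.
move=> hps hc; have [t hp] := pseudo_par hps.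
have [W [pW wW]] := euler (leqnn _) hp hc.
have [vs [hs hk]] := walk_verts wW.
have sW : size W = n by rewrite (perm_size pW) index_enumE size_enum_ord.
have uW : uniq W by rewrite (perm_uniq pW) index_enum_uniq.
have inj : injective (fun i : 'I_n => nth i W i).
  move=> i j /eqP; rewrite (set_nth_default j) ?sW // nth_uniq ?sW //.
  by move/eqP/val_inj.
apply/existsP; exists (perm inj); apply/existsP.
exists [ffun k : 'I_n.+1 => nth 1%g (1%g :: vs) k].
rewrite ffunE /= eqxx /=; apply/forallP => j; rewrite !ffunE permE /= add0n.
have Hi : (nat_of_ord j) < size W by rewrite sW.
exact: (hk j j 1%g Hi).
Qed.
Lemma card_bigcup_le (I T : finType) (P : pred I) (F : I -> {set T}) :
  #|\bigcup_(i | P i) F i| <= \sum_(i | P i) #|F i|.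
Proof.
elim/big_rec2: _ => [|i U k _ hU]; first by rewrite cards0.
apply: leq_trans (leq_card_setU _ _) _.
exact: leq_add.
Qed.

Lemma handshake_g (gT : finGroupType) n (g : lgraph gT n) :
  \sum_(x : gT) deg g x = n.*2.
Proof.
rewrite (eq_bigr _ (fun x _ => deg_dg g x)) handshake.
by rewrite index_enumE size_enum_ord.
Qed.

Definition bad (gT : finGroupType) n :=
  [set g : lgraph gT n | ~~ conn (fun i => g i) (index_enum 'I_n) 1%g].

Lemma gamma_le (gT : finGroupType) n :
  gamma_k gT n <= m_k gT n + #|bad gT n|.
Proof.
rewrite /gamma_k /m_k; apply: leq_trans (leq_card_setU _ _).
apply: subset_leq_card; apply/subsetP => g; rewrite !inE => hg.
case: (boolP (conn (fun i => g i) (index_enum 'I_n) 1%g)) => hc; last by rewrite orbT.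
by rewrite good_path.
Qed.

Lemma m_le (gT : finGroupType) n : m_k gT n <= gamma_k gT n.
Proof.
apply: subset_leq_card; apply/subsetP => g; rewrite !inE; exact: path_pseudo.
Qed.

Definition sameS (gT : finType) (A : {set gT}) :=
  [set p : gT * gT | (p.1 \in A) == (p.2 \in A)].

Lemma card_sameS (gT : finType) (A : {set gT}) :
  (1 <= #|A|) -> (#|A| < #|gT|) -> #|sameS A| <= (#|gT|.-1)^2 + 1.
Proof.
move=> h1 h2.
have : #|sameS A| <= #|A| * #|A| + #|~: A| * #|~: A|.
  rewrite -!cardsX; apply: leq_trans (leq_card_setU _ _).
  apply: subset_leq_card; apply/subsetP => [[a b]]; rewrite !inE /=.
  by case: (a \in A); case: (b \in A).
have hC := cardsC A.
have hb : 1 <= #|~: A| by lia.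
move: h1 hb hC; move: #|A| #|~: A| => [|a] // [|b] // _ _ <- h.
apply: leq_trans h _; rewrite addSn /= expnS expn1; nia.
Qed.

Lemma leq_expr m1 m2 e : m1 <= m2 -> m1 ^ e <= m2 ^ e.
Proof. by case: e => [//|e] h; rewrite leq_exp2r. Qed.

Lemma bad_bound (gT : finGroupType) n :
  #|bad gT n| <= 2 ^ #|gT| * ((#|gT|.-1)^2 + 1) ^ n.
Proof.
set q := (#|gT|.-1)^2 + 1.
pose P := fun A : {set gT} => (1%g \in A) && (A != setT).
pose F := fun A : {set gT} => [set g : lgraph gT n | g \in ffun_on (sameS A)].
have sub : bad gT n \subset \bigcup_(A | P A) F A.
  apply/subsetP => g; rewrite inE => /forallPn [A]; rewrite negb_imply => /andP [oA].
  rewrite negb_or => /andP [nall nhas].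
  apply/bigcupP; exists A.
    rewrite /P oA /=; apply/eqP => eA; move/negP: nall; apply; rewrite eA.
    by apply/allP => i _; rewrite /insd !inE.
  rewrite inE; apply/ffun_onP => i; rewrite inE.
  by move/hasPn: nhas => /(_ i (mem_index_enum i)); rewrite /crs negbK.
apply: leq_trans (subset_leq_card sub) _; apply: leq_trans (card_bigcup_le _ _) _.
apply: (@leq_trans (\sum_(A in powerset [set: gT]) q ^ n)); last first.
  by rewrite sum_nat_const card_powerset cardsT.
rewrite big_mkcond [X in _ <= X]big_mkcond; apply: leq_sum => A _.
rewrite powersetE subsetT /P; case: (boolP (1%g \in A)) => oA //=.
case: (eqVneq A setT) => [//|nA] /=.
rewrite /F cardsE card_ffun_on card_ord; apply: leq_expr; apply: card_sameS.
  by rewrite card_gt0; apply/set0Pn; exists 1%g.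
have : A \subset setT := subsetT A.
rewrite -cardsT => sA; rewrite ltnNge; apply: contra nA => h.
by rewrite eqEcard sA h.
Qed.

Definition fixe (gT : finGroupType) m (h : lgraph gT m) (x : gT) : gT * gT :=
  if (x != 1%g) && odd (deg h x) then (1%g, x) else (1%g, 1%g).

Definition ext (gT : finGroupType) m (h : lgraph gT m) : lgraph gT (m + #|gT|) :=
  [ffun i => match split i with inl j => h j | inr j => fixe h (enum_val j) end].

Lemma ext_l (gT : finGroupType) m (h : lgraph gT m) j : ext h (lshift _ j) = h j.
Proof. by rewrite ffunE (unsplitK (inl _ j)). Qed.

Lemma deg_ext (gT : finGroupType) m (h : lgraph gT m) x :
  deg (ext h) x = deg h x + \sum_(y : gT) ((x == 1%g) + (x == (fixe h y).2)).
Proof.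
rewrite /deg big_split_ord; congr (_ + _).
  by apply: eq_bigr => j _; rewrite ext_l.
rewrite [in RHS](eq_bigl (fun y => y \in gT)) // [in RHS]big_enum_val /=.
apply: eq_bigr => j _.
rewrite ffunE (unsplitK (inr _ j)).
by congr (_ + _); rewrite /fixe; case: ifP.
Qed.

Lemma odd_deg_ext (gT : finGroupType) m (h : lgraph gT m) x :
  x != 1%g -> odd (deg (ext h) x) = false.
Proof.
move=> x1; rewrite deg_ext (negbTE x1) (bigD1 x) //= big1 => [|y yx].
  rewrite /fixe x1 /=; case: (boolP (odd (deg h x))) => hx /=.
    by rewrite eqxx addn0 oddD hx.
  by rewrite (negbTE x1) addn0 oddD (negbTE hx).
rewrite /fixe; case: ifP => _ /=; first by rewrite eq_sym (negbTE yx).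
by rewrite (negbTE x1).
Qed.

Lemma ext_pseudo (gT : finGroupType) m (h : lgraph gT m) :
  has_euler_pseudo_path (ext h).
Proof.
apply/existsP; exists 1%g; rewrite eqxx /=; apply/andP; split.
  by apply/forallP => x; apply/implyP => /andP [x1 _]; rewrite odd_deg_ext.
have := congr1 odd (handshake_g (ext h)); rewrite odd_double odd_sumT.
rewrite (bigD1 1%g) //= big1 => [|y y1]; last by rewrite odd_deg_ext.
by rewrite addbF => ->.
Qed.

Lemma ext_inj (gT : finGroupType) m : injective (@ext gT m).
Proof.
move=> h1 h2 e; apply/ffunP => j.
by rewrite -(ext_l h1) -(ext_l h2) e.
Qed.

Lemma gamma_lb (gT : finGroupType) m :
  (#|gT| * #|gT|) ^ m <= gamma_k gT (m + #|gT|).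
Proof.
have -> : (#|gT| * #|gT|) ^ m = #|[set: lgraph gT m]|.
  by rewrite cardsT card_ffun card_prod card_ord.
rewrite -(card_imset _ (@ext_inj gT m)); apply: subset_leq_card.
apply/subsetP => g /imsetP [h _ ->]; rewrite inE; exact: ext_pseudo.
Qed.
Lemma bern q n : q ^ n * (q + n) <= q.+1 ^ n * q.
Proof.
elim: n => [|n IH]; first by rewrite !expn0 addn0.
rewrite !expnS.
have h1 : q ^ n * (q + n.+1) * q <= q ^ n * (q + n) * q.+1.
  rewrite -!mulnA leq_mul2l; apply/orP; right; nia.
have h2 : q ^ n * (q + n) * q.+1 <= q.+1 ^ n * q * q.+1 by rewrite leq_mul2r IH orbT.
nia.
Qed.

Lemma key_nat (gT : finGroupType) n (hk : 2 <= #|gT|) : #|gT| <= n ->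
  (gamma_k gT n - m_k gT n) * (((#|gT|.-1)^2 + 1) + n) <=
  (2 ^ #|gT| * (#|gT| * #|gT|) ^ #|gT| * ((#|gT|.-1)^2 + 1)) * gamma_k gT n.
Proof.
move=> hkn.
set k := #|gT|; set q := (k.-1)^2 + 1; set K := k * k.
have hgb := gamma_le gT n; have hbb := bad_bound gT n.
have hlb : K ^ (n - k) <= gamma_k gT n by have := gamma_lb gT (n - k); rewrite subnK.
have hq1 : q.+1 <= K.
  rewrite /q /K; move: hk; rewrite -/k; clearbody k; clear.
  case: k => [|[|k']] //= _; rewrite expnS expn1; nia.
have h1 : gamma_k gT n - m_k gT n <= 2 ^ k * q ^ n.
  by apply: leq_trans hbb; rewrite leq_subLR.
apply: leq_trans (leq_mul h1 (leqnn _)) _.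
rewrite -mulnA.
apply: leq_trans (leq_mul (leqnn _) (bern q n)) _.
have h3 : q.+1 ^ n <= K ^ (n - k) * K ^ k by rewrite -expnD subnK // leq_expr.
have h4 : q.+1 ^ n * q <= gamma_k gT n * K ^ k * q.
  by rewrite leq_mul2r (leq_trans h3) ?orbT // leq_mul2r hlb orbT.
apply: leq_trans (leq_mul (leqnn _) h4) _.
by rewrite (mulnC (gamma_k _ _)) -!mulnA (mulnC q).
Qed.

Local Open Scope ring_scope.
Unset Implicit Arguments.

Theorem mainTheorem16 (gT : finGroupType) (hk : (2 <= #|gT|)%N) :
  forall eps : rat, 0 < eps ->
  exists N : nat, forall n : nat, (N <= n)%N ->
    `| (m_k gT n)%:R / (gamma_k gT n)%:R - 1 | < eps.
Proof.
move=> eps heps.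
set c := (2 ^ #|gT| * (#|gT| * #|gT|) ^ #|gT| * ((#|gT|.-1)^2 + 1))%N.
exists (maxn #|gT| (Num.bound (c%:R / eps))) => n.
rewrite geq_max => /andP [hkn hbn].
have key := key_nat hk hkn.
have hmg := m_le gT n.
have hG : (0 < gamma_k gT n)%N.
  have := gamma_lb gT (n - #|gT|); rewrite subnK //; apply: leq_trans.
  rewrite expn_gt0 muln_gt0 andbb; lia.
move: key hmg hG hbn; set G := gamma_k gT n; set Mm := m_k gT n.
set q := ((#|gT|.-1)^2 + 1)%N => key hmg hG hbn.
have keyR : (G%:R - Mm%:R) * (q%:R + n%:R) <= c%:R * G%:R :> rat.
  by rewrite -natrB // -natrD -!natrM ler_nat.
have hGR : 0 < G%:R :> rat by rewrite ltr0n.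
have hbR : c%:R / eps < n%:R :> rat.
  apply: lt_le_trans (archi_boundP _) _; first by rewrite divr_ge0 // ltW.
  by rewrite ler_nat.
have hcR : c%:R < eps * n%:R :> rat.
  by rewrite mulrC -ltr_pdivrMr.
have hMG : Mm%:R <= G%:R :> rat by rewrite ler_nat.
have hq : 0 <= q%:R :> rat by [].
set r := Mm%:R / G%:R.
have hr : r * G%:R = Mm%:R by rewrite /r mulfVK // gt_eqF.
have hn : 0 < n%:R :> rat by rewrite ltr0n; lia.
have hQ : 0 < q%:R + n%:R :> rat by lra.
have heq : 0 <= eps * q%:R by rewrite mulr_ge0 // ltW.
have hc2 : c%:R < eps * (q%:R + n%:R) by rewrite mulrDr; lra.
have h1 : c%:R * G%:R < eps * (q%:R + n%:R) * G%:R by rewrite ltr_pM2r.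
have h2 : (G%:R - Mm%:R) * (q%:R + n%:R) < (eps * G%:R) * (q%:R + n%:R).
  by apply: le_lt_trans keyR _; move: h1; rewrite mulrAC.
have hD : G%:R - Mm%:R < eps * G%:R by rewrite -(ltr_pM2r hQ).
have hr1 : r <= 1 by rewrite -(ler_pM2r hGR) hr mul1r.
have hr2 : 0 < (r - 1 + eps) * G%:R by rewrite !mulrDl hr mulN1r; lra.
have hr3 : 0 < r - 1 + eps by rewrite -(pmulr_lgt0 _ hGR).
rewrite ltr_norml; apply/andP; split; lra.
Qed.
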